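(* Let $\mathcal{A}$ be a unital associative algebra over a field $F$ with $\operatorname{char}(F)\neq 2$. Then (a) $\operatorname{GJDer}(\mathcal{A})=\operatorname{QJCent}(\mathcal{A})+\operatorname{QJDer}(\mathcal{A})$, and (b) $\operatorname{JCent}(\mathcal{A})=\operatorname{QJCent}(\mathcal{A})\cap\operatorname{QJDer}(\mathcal{A})$.
   Context: For $x,y\in\mathcal{A}$ let $x\circ y=xy+yx$. All maps below are $F$-linear maps $\mathcal{A}\to\mathcal{A}$. $\operatorname{GJDer}(\mathcal{A})$ (generalized Jordan derivations) is the set of linear $f$ for which there exist linear $g,h$ with $f(x)\circ y+x\circ g(y)=h(x\circ y)$ for all $x,y\in\mathcal{A}$. $\operatorname{QJCent}(\mathcal{A})$ (quasi Jordan centralizers) is the set of linear $f$ with $f(x)\circ y=x\circ f(y)$ for all $x,y$. $\operatorname{QJDer}(\mathcal{A})$ (quasi Jordan derivations) is the set of linear $f$ for which there exists a linear $h$ with $f(x)\circ y+x\circ f(y)=h(x\circ y)$ for all $x,y$. $\operatorname{JCent}(\mathcal{A})$ (Jordan centralizers) is the set of linear $f$ with $f(x\circ y)=f(x)\circ y$ for all $x,y$. The sum of two sets of maps means the set of all pointwise sums. *)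

(* Defs.v *)
From HB Require Import structures.
From mathcomp Require Import all_boot all_order all_algebra.
Set Implicit Arguments. Unset Strict Implicit. Unset Printing Implicit Defensive.
Import GRing.Theory.
Local Open Scope ring_scope.

Section JordanMaps.
Variables (F : fieldType) (A : algType F).

Definition jprod (x y : A) : A := x * y + y * x.

Definition is_flinear (f : A -> A) : Prop :=
  forall (a : F) (x y : A), f (a *: x + y) = a *: f x + f y.

Definition GJDer (f : A -> A) : Prop :=
  is_flinear f /\
  exists g h : A -> A, [/\ is_flinear g, is_flinear h &
    forall x y, jprod (f x) y + jprod x (g y) = h (jprod x y)].

Definition QJCent (f : A -> A) : Prop :=
  is_flinear f /\ forall x y, jprod (f x) y = jprod x (f y).

Definition QJDer (f : A -> A) : Prop :=
  is_flinear f /\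
  exists h : A -> A, is_flinear h /\
    forall x y, jprod (f x) y + jprod x (f y) = h (jprod x y).

Definition JCent (f : A -> A) : Prop :=
  is_flinear f /\ forall x y, f (jprod x y) = jprod (f x) y.

End JordanMaps.

(* Main.v *)
Require Import Defs.
From HB Require Import structures.
From mathcomp Require Import all_boot all_order all_algebra.
Set Implicit Arguments. Unset Strict Implicit. Unset Printing Implicit Defensive.
Import GRing.Theory.
Local Open Scope ring_scope.

Section H.
Variables (F : fieldType) (A : algType F).
Implicit Types (x y u v : A) (f : A -> A).

Lemma pC x y : jprod x y = jprod y x. Proof. by rewrite /jprod addrC. Qed.
Lemma pDr x u v : jprod x (u + v) = jprod x u + jprod x v.
Proof. by rewrite /jprod mulrDr mulrDl addrACA. Qed.
Lemma pZr c x y : jprod x (c *: y) = c *: jprod x y.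
Proof. by rewrite /jprod -scalerAr -scalerAl scalerDr. Qed.
Lemma p1l y : jprod 1 y = y + y. Proof. by rewrite /jprod mul1r mulr1. Qed.

Lemma linD f : is_flinear f -> forall x y, f (x + y) = f x + f y.
Proof. by move=> hf x y; rewrite -[x]scale1r hf !scale1r. Qed.
Lemma lin0 f : is_flinear f -> f 0 = 0.
Proof. move=> hf; have := hf 1 0 0; rewrite !scale1r addr0 => e.
by apply: (@addrI _ (f 0)); rewrite addr0 -e. Qed.
Lemma linZ f : is_flinear f -> forall c x, f (c *: x) = c *: f x.
Proof. by move=> hf c x; rewrite -[c *: x]addr0 hf lin0 // addr0. Qed.

Variable h2 : (2%:R : F) != 0.
Let i := (2%:R : F)^-1.
Lemma half v : i *: (v + v) = v.
Proof. by rewrite -mulr2n -scaler_nat scalerA mulVf // scale1r. Qed.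
Lemma half' v : i *: v + i *: v = v.
Proof. by rewrite -scalerDr half. Qed.


Lemma dbl u v : u + u = v + v -> u = v.
Proof. by move=> e; rewrite -(half u) e half. Qed.
Lemma scaleI u v : i *: u = i *: v -> u = v.
Proof. by move=> e; rewrite -(half' u) e half'. Qed.

Lemma linS c f : is_flinear f -> is_flinear (fun x => c *: f x).
Proof. by move=> hf d x y; rewrite hf scalerDr !scalerA mulrC. Qed.
Lemma linN f : is_flinear f -> is_flinear (fun x => - f x).
Proof. by move=> hf d x y; rewrite hf opprD scalerN. Qed.
Lemma linP f g : is_flinear f -> is_flinear g -> is_flinear (fun x => f x + g x).
Proof. by move=> hf hg d x y; rewrite hf hg scalerDr addrACA. Qed.

Section G.

Variable J : A -> A -> A.
Hypotheses (jC : forall x y, J x y = J y x)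
  (jDr : forall x u v, J x (u + v) = J x u + J x v)
  (jZr : forall c x y, J x (c *: y) = c *: J x y)
  (j1l : forall y, J 1 y = y + y).
Lemma jDl x u v : J (u + v) x = J u x + J v x.
Proof. by rewrite !(jC _ x) jDr. Qed.
Lemma jZl c x y : J (c *: x) y = c *: J x y.
Proof. by rewrite !(jC _ y) jZr. Qed.
Lemma jNr x y : J x (- y) = - J x y.
Proof. by rewrite -scaleN1r jZr scaleN1r. Qed.
Lemma jNl x y : J (- x) y = - J x y.
Proof. by rewrite !(jC _ y) jNr. Qed.
Lemma j1r y : J y 1 = y + y. Proof. by rewrite jC j1l. Qed.
Lemma linJ w : is_flinear (fun x => J x w).
Proof. by move=> d x y; rewrite jDl jZl. Qed.
Lemma partA1 f : (is_flinear f /\ exists g h : A -> A, [/\ is_flinear g, is_flinear h & forall x y, J (f x) y + J x (g y) = h (J x y)]) ->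
  exists f1 f2 : A -> A, [/\ (is_flinear f1 /\ forall x y, J (f1 x) y = J x (f1 y)), (is_flinear f2 /\ exists h : A -> A, is_flinear h /\ forall x y, J (f2 x) y + J x (f2 y) = h (J x y)) & forall x, f x = f1 x + f2 x].
Proof.
case=> hf [g [h [hg hh E]]].
set a := f 1; set b := g 1; set w := b - a.
have Rg : forall y, g y = f y + i *: J y w.
  move=> y; have e1 := E 1 y; have e2 := E y 1.
  rewrite !j1l !j1r in e1 e2. rewrite (linD hh) in e1. rewrite (linD hh) in e2.
  rewrite -(half (g y)) -(half (f y)) -scalerDr; congr (i *: _).
  have -> : g y + g y = (h y + h y) - J a y by rewrite -e1 (addrC (J a y)) addrK.
  by rewrite -e2 /w jDr jNr (jC a y) [RHS]addrA.
clearbody w.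
have S : forall x y, J (J x w) y = J x (J y w).
  move=> x y; have e1 := E x y; have e2 := E y x.
  rewrite (jC y x) -e1 !Rg !jDr (jC (f y) x) (jC y (f x)) in e2.
  move: e2; rewrite addrCA !addrA. move=> /addrI e2.
  by apply: scaleI; rewrite (jC (J x w) y) -(jZr i y (J x w)) -(jZr i x (J y w)).
exists (fun x => - (i *: (i *: J x w))), (fun x => f x + i *: (i *: J x w)).
split.
- split; first by apply/linN/linS/linS/linJ.
  by move=> x y; rewrite jNl jNr !jZl !jZr S.
- split; first by apply/linP => //; apply/linS/linS/linJ.
  exists h; split => // x y.
  rewrite -E Rg !jDl !jDr !jZl !jZr S addrACA [RHS]addrA.
  by rewrite half'.
- by move=> x; rewrite addrCA addNr addr0.
Qed.

Lemma partA2 f : (exists f1 f2 : A -> A, [/\ (is_flinear f1 /\ forall x y, J (f1 x) y = J x (f1 y)), (is_flinear f2 /\ exists h : A -> A, is_flinear h /\ forall x y, J (f2 x) y + J x (f2 y) = h (J x y)) & forall x, f x = f1 x + f2 x]) -> (is_flinear f /\ exists g h : A -> A, [/\ is_flinear g, is_flinear h & forall x y, J (f x) y + J x (g y) = h (J x y)]).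
Proof.
case=> f1 [f2 [[hf1 C1] [hf2 [h [hh E2]]] D]].
have hf : is_flinear f by move=> c x y; rewrite !D hf1 hf2 scalerDr addrACA.
split => //; exists (fun x => f2 x - f1 x), h; split => //.
  by apply: linP => //; apply: linN.
move=> x y; rewrite !D jDl !jDr jNr -E2 C1.
by rewrite addrC addrA addrNK addrC.
Qed.

Lemma partB f : (is_flinear f /\ forall x y, f (J x y) = J (f x) y) <-> (is_flinear f /\ forall x y, J (f x) y = J x (f y)) /\ (is_flinear f /\ exists h : A -> A, is_flinear h /\ forall x y, J (f x) y + J x (f y) = h (J x y)).
Proof.
split.
  case=> hf HJ.
  have C : forall x y, J (f x) y = J x (f y).
    by move=> x y; rewrite -HJ (jC x y) HJ jC.
  split; split => //.
  exists (fun z => f z + f z); split; first exact: linP.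
  by move=> x y; rewrite (C x y) (jC x (f y)) -!HJ (jC y x).
case=> [[hf C] [_ [h [hh E]]]].
have hx : forall x, h x = f x + f x.
  move=> x; have e := E x 1; rewrite -(C x 1) !j1r (linD hh) in e.
  by symmetry; apply: dbl.
split => // x y; have e := E x y; rewrite -(C x y) hx in e.
by symmetry; apply: dbl.
Qed.

End G.
End H.

Theorem theorem2p1 (F : fieldType) (A : algType F)
    (hchar : ~~ (2%N \in [pchar F])) :
  (forall f : A -> A,
      GJDer f <->
      exists f1 f2 : A -> A,
        [/\ QJCent f1, QJDer f2 & forall x, f x = f1 x + f2 x])
  /\
  (forall f : A -> A, JCent f <-> QJCent f /\ QJDer f).
Proof.
have h2 : (2%:R : F) != 0 by move: hchar; rewrite inE /=.
split => f.
  split; first exact: (@partA1 F A h2 (@jprod F A) (@pC F A) (@pDr F A) (@pZr F A) (@p1l F A) f).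
  exact: (@partA2 F A (@jprod F A) (@pC F A) (@pDr F A) (@pZr F A) f).
exact: (@partB F A h2 (@jprod F A) (@pC F A) (@p1l F A) f).
Qed.
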